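(* Let $\alpha$ be irrational with $\ln2/\ln3<\alpha<1$ and write $1c_\alpha=s_0s_1s_2\cdots$. Then $$\limsup_{k\to\infty}\Phi_{\mathbb{R}}(s_ks_{k+1}\cdots)=\Phi_{\mathbb{R}}(1c_\alpha),\qquad \liminf_{k\to\infty}\Phi_{\mathbb{R}}(s_ks_{k+1}\cdots)=\Phi_{\mathbb{R}}(0c_\alpha)=3\Phi_{\mathbb{R}}(1c_\alpha)+1.$$
   Context: For $0<\alpha<1$, $1c_\alpha=(\lceil(j+1)\alpha\rceil-\lceil j\alpha\rceil)_{j\ge0}$ and $0c_\alpha=(\lfloor(j+1)\alpha\rfloor-\lfloor j\alpha\rfloor)_{j\ge0}$. For an infinite $0$-$1$ word $w$ with $1$'s at positions $d_0<d_1<\cdots$, $\Phi_{\mathbb{R}}(w)=-\sum_{i\ge0}2^{d_i}/3^{i+1}$ (a convergent real series in the situation considered). *)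

(* Defs.v *)
From Stdlib Require Import Reals ZArith.
From Coquelicot Require Import Coquelicot.
Open Scope R_scope.

Definition rfloor (x : R) : Z := (up x - 1)%Z.
Definition rceil (x : R) : Z := (- rfloor (- x))%Z.

(* infinite words over integers (the ones considered are 0-1 words) *)
Definition word := nat -> Z.

Definition oneC (alpha : R) : word :=
  fun j => (rceil (INR (S j) * alpha) - rceil (INR j * alpha))%Z.
Definition zeroC (alpha : R) : word :=
  fun j => (rfloor (INR (S j) * alpha) - rfloor (INR j * alpha))%Z.

Definition suffix (w : word) (k : nat) : word := fun j => w (k + j)%nat.

Fixpoint ones (w : word) (n : nat) : nat :=
  match n with
  | O => O
  | S m => (ones w m + (if Z.eqb (w m) 1%Z then 1 else 0))%nat
  end.

(* If w_j = 1 is the i-th one (i counted from 0, i.e. j = d_i), then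
   ones w (S j) = i+1, so this term is 2^{d_i}/3^{i+1}; all other terms vanish. *)
Definition Phi_term (w : word) (j : nat) : R :=
  if Z.eqb (w j) 1%Z then 2 ^ j / 3 ^ (ones w (S j)) else 0.

Definition PhiR (w : word) : R := - Series (Phi_term w).

Definition irrational (x : R) : Prop :=
  ~ exists (p q : Z), q <> 0%Z /\ x = IZR p / IZR q.

(* Main.v *)
Require Import Defs.
From Stdlib Require Import Reals ZArith Lia Lra.
From Coquelicot Require Import Coquelicot.
Open Scope R_scope.

Lemma rfloor_spec x : IZR (rfloor x) <= x < IZR (rfloor x) + 1.
Proof.
  unfold rfloor. destruct (archimed x) as [H1 H2].
  rewrite minus_IZR. split; lra.
Qed.

Lemma rfloor_uniq x z : IZR z <= x < IZR z + 1 -> rfloor x = z.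
Proof.
  intros [H1 H2]. unfold rfloor.
  assert (z + 1 = up x)%Z. { apply tech_up; rewrite plus_IZR; lra. }
  lia.
Qed.

Lemma rceil_spec x : IZR (rceil x) - 1 < x <= IZR (rceil x).
Proof.
  unfold rceil. destruct (rfloor_spec (- x)) as [H1 H2].
  rewrite opp_IZR. split; lra.
Qed.

Lemma rceil_uniq x z : IZR z - 1 < x <= IZR z -> rceil x = z.
Proof.
  intros [H1 H2]. unfold rceil.
  rewrite (rfloor_uniq (-x) (-z)). lia. rewrite opp_IZR; lra.
Qed.

Lemma rfloor_step x a : 0 < a < 1 ->
  rfloor (x + a) = rfloor x \/ rfloor (x + a) = (rfloor x + 1)%Z.
Proof.
  intros Ha. destruct (rfloor_spec x) as [A1 A2].
  destruct (rfloor_spec (x+a)) as [B1 B2].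
  assert (IZR (rfloor x) < IZR (rfloor (x+a)) + 1) by lra.
  assert (IZR (rfloor (x+a)) < IZR (rfloor x) + 2) by lra.
  rewrite <- plus_IZR in *. apply lt_IZR in H. apply lt_IZR in H0. lia.
Qed.

Lemma rceil_step x a : 0 < a < 1 ->
  rceil (x + a) = rceil x \/ rceil (x + a) = (rceil x + 1)%Z.
Proof.
  intros Ha. destruct (rceil_spec x) as [A1 A2].
  destruct (rceil_spec (x+a)) as [B1 B2].
  assert (IZR (rceil x) < IZR (rceil (x+a)) + 1) by lra.
  assert (IZR (rceil (x+a)) < IZR (rceil x) + 2) by lra.
  rewrite <- plus_IZR in *. apply lt_IZR in H. apply lt_IZR in H0. lia.
Qed.

Fixpoint psum (f : nat -> R) (n : nat) : R :=
  match n with O => 0 | S m => psum f m + f m end.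

Lemma sum_n_psum f n : sum_n f n = psum f (S n).
Proof.
  induction n.
  - rewrite sum_O. simpl. rewrite Rplus_0_l. reflexivity.
  - rewrite sum_Sn, IHn. reflexivity.
Qed.

Section Gen.
Variables (w : word) (c : nat -> Z) (p : nat -> nat).
Hypothesis Hw : forall j, w j = (c (S j) - c j)%Z.
Hypothesis H0 : c O = 0%Z.
Hypothesis Hs : forall j, c (S j) = c j \/ c (S j) = (c j + 1)%Z.
Hypothesis Hp : forall j, c (S j) = (c j + 1)%Z -> p (Z.to_nat (c j)) = j.
Hypothesis Hunb : forall M : nat, exists N, (Z.of_nat M <= c N)%Z.

Definition bseq (m : nat) : R := 2 ^ p m / 3 ^ (S m).

Lemma c_nonneg j : (0 <= c j)%Z.
Proof. induction j. lia. destruct (Hs j); lia. Qed.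

Lemma c_mono i j : (i <= j)%nat -> (c i <= c j)%Z.
Proof. induction 1. lia. destruct (Hs m); lia. Qed.

Lemma ones_c n : ones w n = Z.to_nat (c n).
Proof.
  induction n. simpl. rewrite H0. reflexivity.
  simpl. rewrite IHn, Hw. pose proof (c_nonneg n).
  destruct (Hs n) as [E|E]; rewrite E.
  - replace (c n - c n)%Z with 0%Z by lia. simpl. lia.
  - replace (c n + 1 - c n)%Z with 1%Z by lia. simpl. lia.
Qed.

Lemma psum_c N : psum (Phi_term w) N = psum bseq (Z.to_nat (c N)).
Proof.
  induction N. simpl. rewrite H0. reflexivity.
  simpl. rewrite IHN. unfold Phi_term. rewrite Hw.
  pose proof (c_nonneg N).
  destruct (Hs N) as [E|E]; rewrite E.
  - replace (c N - c N)%Z with 0%Z by lia. simpl. ring.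
  - replace (c N + 1 - c N)%Z with 1%Z by lia. simpl.
    replace (Z.to_nat (c N + 1)) with (S (Z.to_nat (c N))) by lia.
    simpl psum. f_equal. unfold bseq. rewrite Hp by exact E.
    change (ones w N + (if (w N =? 1)%Z then 1%nat else 0%nat))%nat with (ones w (S N)).
    rewrite ones_c, E. replace (Z.to_nat (c N + 1)) with (S (Z.to_nat (c N))) by lia. reflexivity.
Qed.

Lemma gen_series : ex_series bseq -> is_series (Phi_term w) (Series bseq).
Proof.
  intros Hex.
  assert (L : is_lim_seq (psum bseq) (Series bseq)).
  { apply is_lim_seq_incr_1.
    apply is_lim_seq_ext with (u := sum_n bseq).
    intros; apply sum_n_psum.
    apply Series_correct in Hex. exact Hex. }
  assert (L2 : is_lim_seq (fun N => psum bseq (Z.to_nat (c N))) (Series bseq)).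
  { apply is_lim_seq_subseq; [|exact L].
    intros P [M HM]. destruct (Hunb M) as [N HN]. exists N.
    intros n Hn. apply HM. pose proof (c_mono N n Hn). lia. }
  assert (L3 : is_lim_seq (psum (Phi_term w)) (Series bseq)).
  { apply is_lim_seq_ext with (2 := L2). intros; symmetry; apply psum_c. }
  apply is_lim_seq_incr_1 in L3.
  apply (is_lim_seq_ext _ (sum_n (Phi_term w))) in L3.
  exact L3. intros; symmetry; apply sum_n_psum.
Qed.
End Gen.
Section Alpha.
Variable alpha : R.
Hypothesis Ha0 : 0 < alpha.
Hypothesis Ha1 : alpha < 1.
Hypothesis Hq : ln 2 < alpha * ln 3.

Definition pp (u : R) (m : nat) : nat := Z.to_nat (rfloor ((INR m + u) / alpha)).
Definition aa (u : R) (m : nat) : R := 2 ^ pp u m / 3 ^ (S m).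
Definition qq : R := 2 / Rpower 3 alpha.
Definition GG (u : R) : R := Series (aa u).

Lemma R3a_gt2 : 2 < Rpower 3 alpha.
Proof.
  unfold Rpower. rewrite <- (exp_ln 2) by lra. apply exp_increasing. lra.
Qed.

Lemma qq_range : 0 < qq < 1.
Proof.
  pose proof R3a_gt2. unfold qq. split.
  apply Rdiv_lt_0_compat; lra.
  apply Rlt_div_l; lra.
Qed.

Lemma pp_spec u m : 0 <= u <= 1 ->
  (m <= pp u m)%nat /\ INR (pp u m) * alpha <= INR m + u.
Proof.
  intros Hu. unfold pp.
  destruct (rfloor_spec ((INR m + u) / alpha)) as [F1 F2].
  set (z := rfloor ((INR m + u) / alpha)) in *.
  assert (Hm : INR m <= (INR m + u) / alpha).
  { apply Rle_div_r. lra. pose proof (pos_INR m).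
    apply Rle_trans with (INR m). nra. lra. }
  assert (Z.of_nat m <= z)%Z.
  { assert (IZR (Z.of_nat m) < IZR (z + 1)).
    { rewrite plus_IZR, <- INR_IZR_INZ. lra. }
    apply lt_IZR in H. lia. }
  split. lia.
  rewrite INR_IZR_INZ, Z2Nat.id by lia.
  apply Rle_div_r in F1; lra.
Qed.

Lemma aa_bound u m : 0 <= u <= 1 -> 0 <= aa u m <= qq ^ m.
Proof.
  intros Hu. destruct (pp_spec u m Hu) as [P1 P2].
  pose proof R3a_gt2. pose proof qq_range.
  unfold aa. set (P := pp u m) in *. split.
  { apply Rdiv_le_0_compat. apply pow_le; lra. apply pow_lt; lra. }
  apply Rle_trans with (qq ^ P).
  - unfold qq, Rdiv. rewrite Rpow_mult_distr, pow_inv.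
    apply Rmult_le_compat_l. apply pow_le; lra.
    apply Rinv_le_contravar. apply pow_lt; lra.
    rewrite <- Rpower_pow by lra. rewrite Rpower_mult.
    rewrite <- Rpower_pow by lra. apply Rle_Rpower. lra.
    rewrite S_INR. lra.
  - replace P with (m + (P - m))%nat by lia. rewrite pow_add.
    rewrite <- (Rmult_1_r (qq ^ m)) at 2. apply Rmult_le_compat_l.
    apply pow_le; lra. rewrite <- (pow1 (P - m)). apply pow_incr. lra.
Qed.

Lemma ex_aa u : 0 <= u <= 1 -> ex_series (aa u).
Proof.
  intros Hu. apply (@ex_series_le R_AbsRing R_CompleteNormedModule _ (fun n => qq ^ n)).
  - intros n. destruct (aa_bound u n Hu). unfold norm; simpl.
    rewrite Rabs_pos_eq; lra.
  - apply ex_series_geom. pose proof qq_range. rewrite Rabs_pos_eq; lra.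
Qed.

Lemma rfloor_mono x y : x <= y -> (rfloor x <= rfloor y)%Z.
Proof.
  intros H. destruct (rfloor_spec x). destruct (rfloor_spec y).
  assert (IZR (rfloor x) < IZR (rfloor y + 1)) by (rewrite plus_IZR; lra).
  apply lt_IZR in H4. lia.
Qed.

Lemma aa_mono u v m : 0 <= u -> u <= v -> aa u m <= aa v m.
Proof.
  intros Hu Huv. unfold aa, pp. unfold Rdiv at 1 3.
  apply Rmult_le_compat_r. left; apply Rinv_0_lt_compat, pow_lt; lra.
  apply Rle_pow. lra.
  assert (rfloor ((INR m + u) / alpha) <= rfloor ((INR m + v) / alpha))%Z.
  { apply rfloor_mono. unfold Rdiv. apply Rmult_le_compat_r.
    left; apply Rinv_0_lt_compat; lra. lra. }
  lia.
Qed.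

Lemma GG_mono u v : 0 <= u -> u <= v -> v <= 1 -> GG u <= GG v.
Proof.
  intros. unfold GG. apply Series_le.
  - intros n. split. apply (aa_bound u n). lra. apply aa_mono; lra.
  - apply ex_aa. lra.
Qed.

Lemma GG_close u v M : 0 <= u -> u <= v -> v <= 1 ->
  (forall m, (m < M)%nat -> aa u m = aa v m) ->
  GG v - GG u <= qq ^ M / (1 - qq).
Proof.
  intros Hu Huv Hv Heq. pose proof qq_range.
  unfold GG. rewrite <- Series_minus by (apply ex_aa; lra).
  set (d := fun n => aa v n - aa u n).
  assert (Hd : forall n, 0 <= d n <= qq ^ n).
  { intros n. unfold d. pose proof (aa_mono u v n Hu Huv).
    destruct (aa_bound u n); [lra|]. destruct (aa_bound v n); [lra|]. lra. }
  assert (Hexd : ex_series d).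
  { apply (@ex_series_le R_AbsRing R_CompleteNormedModule _ (fun n => qq ^ n)).
    intros n. unfold norm; simpl. rewrite Rabs_pos_eq; apply Hd.
    apply ex_series_geom. rewrite Rabs_pos_eq; lra. }
  rewrite (Series_incr_n d (S M)) by (auto with arith).
  assert (Hz : sum_f_R0 d (Init.Nat.pred (S M)) <= 0 + qq ^ M).
  { simpl Init.Nat.pred. clear Hexd.
    assert (forall K, (K <= M)%nat -> sum_f_R0 d K <= if Nat.eqb K M then qq ^ M else 0).
    { induction K; intros HK.
      - simpl. destruct M. simpl. specialize (Hd 0%nat). simpl in Hd. lra.
        simpl. assert (d 0%nat = 0) by (unfold d; rewrite Heq by lia; ring). lra.
      - change (sum_f_R0 d (S K)) with (sum_f_R0 d K + d (S K)). rewrite (proj2 (Nat.eqb_neq K M)) in IHK by lia.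
        specialize (IHK ltac:(lia)).
        destruct (Nat.eqb (S K) M) eqn:E.
        + apply Nat.eqb_eq in E. subst M. specialize (Hd (S K)). lra.
        + apply Nat.eqb_neq in E. assert (d (S K) = 0) by (unfold d; rewrite Heq by lia; ring). lra. }
    specialize (H0 M (le_n M)). rewrite Nat.eqb_refl in H0. lra. }
  assert (Ht : Series (fun k => d (S M + k)%nat) <= qq ^ (S M) * / (1 - qq)).
  { rewrite <- Series_geom by (rewrite Rabs_pos_eq; lra).
    rewrite <- Series_scal_l. apply Series_le.
    intros n. split. apply Hd. rewrite <- pow_add. apply Hd.
    apply (ex_series_scal_l (qq ^ S M) (fun n => qq ^ n)).
    apply ex_series_geom. rewrite Rabs_pos_eq; lra. }
  assert (qq ^ M + qq ^ S M / (1 - qq) = qq ^ M / (1 - qq)).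
  { simpl. field. lra. }
  unfold Rdiv in *. lra.
Qed.

Fixpoint mn (f : nat -> R) (N : nat) : R :=
  match N with O => 1 | S n => Rmin (mn f n) (f n) end.

Lemma mn_pos f N : (forall k, (k < N)%nat -> 0 < f k) -> 0 < mn f N.
Proof.
  induction N; intros H; simpl. lra.
  apply Rmin_glb_lt. apply IHN; intros; apply H; lia. apply H; lia.
Qed.

Lemma mn_le f N k : (k < N)%nat -> mn f N <= f k.
Proof.
  induction N; intros H; simpl. lia.
  destruct (Nat.eq_dec k N). subst. apply Rmin_r.
  eapply Rle_trans. apply Rmin_l. apply IHN; lia.
Qed.

Lemma mn_le1 f N : mn f N <= 1.
Proof. induction N; simpl. lra. eapply Rle_trans. apply Rmin_l. auto. Qed.

Lemma small_tail eps : 0 < eps -> exists M, qq ^ M / (1 - qq) < eps.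
Proof.
  intros He. pose proof qq_range.
  destruct (pow_lt_1_zero qq ltac:(rewrite Rabs_pos_eq; lra) (eps * (1 - qq))) as [M HM].
  apply Rmult_lt_0_compat; lra.
  exists M. specialize (HM M (le_n M)). rewrite Rabs_pos_eq in HM by (apply pow_le; lra).
  apply Rlt_div_l; lra.
Qed.

Lemma near0 eps : 0 < eps -> exists del, 0 < del /\
  forall u, 0 <= u < del -> GG u < GG 0 + eps.
Proof.
  intros He. destruct (small_tail eps He) as [M HM].
  set (f := fun m => (IZR (rfloor (INR m / alpha)) + 1) * alpha - INR m).
  exists (mn f M). split.
  - apply mn_pos. intros k _. unfold f.
    destruct (rfloor_spec (INR k / alpha)) as [_ F2].
    apply Rlt_div_l in F2; lra.
  - intros u Hu. set (D := mn f M) in *.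
    assert (GG u - GG 0 <= qq ^ M / (1 - qq)).
    { pose proof (mn_le1 f M) as H. fold D in H.
      apply GG_close; try lra.
      intros m Hm. unfold aa, pp. rewrite Rplus_0_r.
      replace (rfloor ((INR m + u)/alpha)) with (rfloor (INR m / alpha)). reflexivity.
      pose proof (mn_le f M m Hm) as H0. fold D in H0. unfold f in H0.
      symmetry. apply rfloor_uniq.
      destruct (rfloor_spec (INR m / alpha)) as [F1 F2]. split.
      + apply Rle_trans with (INR m / alpha); auto.
        unfold Rdiv. apply Rmult_le_compat_r. left; apply Rinv_0_lt_compat; lra. lra.
      + apply Rlt_div_l; lra. }
    lra.
Qed.

Hypothesis Hirr : irrational alpha.

Lemma near1 eps : 0 < eps -> exists del, 0 < del /\
  forall u, 1 - del < u <= 1 -> GG 1 - eps < GG u.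
Proof.
  intros He. destruct (small_tail eps He) as [M HM].
  set (f := fun m => INR m + 1 - IZR (rfloor ((INR m + 1) / alpha)) * alpha).
  assert (Hf : forall m, 0 < f m).
  { intros m. unfold f. destruct (rfloor_spec ((INR m + 1) / alpha)) as [F1 F2].
    apply Rle_div_r in F1; [|lra].
    destruct (Rle_lt_or_eq_dec _ _ F1) as [Hl|Heq]. lra.
    exfalso. apply Hirr. exists (Z.of_nat m + 1)%Z, (rfloor ((INR m + 1) / alpha)).
    assert (Hz : IZR (rfloor ((INR m + 1) / alpha)) <> 0).
    { intro Z0. rewrite Z0 in Heq. pose proof (pos_INR m). lra. }
    split. intro Z1. apply Hz. rewrite Z1. reflexivity.
    rewrite plus_IZR, <- INR_IZR_INZ. apply (Rmult_eq_reg_r (IZR (rfloor ((INR m + 1) / alpha)))); [|exact Hz]. unfold Rdiv. rewrite Rmult_assoc, Rinv_l, Rmult_1_r by exact Hz. lra. }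
  exists (mn f M). split.
  - apply mn_pos. intros; apply Hf.
  - intros u Hu. pose proof (mn_le1 f M). set (D := mn f M) in *.
    assert (GG 1 - GG u <= qq ^ M / (1 - qq)).
    { apply GG_close; try lra.
      intros m Hm. unfold aa, pp.
      replace (rfloor ((INR m + u)/alpha)) with (rfloor ((INR m + 1) / alpha)). reflexivity.
      pose proof (mn_le f M m Hm) as H0. fold D in H0. unfold f in H0.
      symmetry. apply rfloor_uniq.
      destruct (rfloor_spec ((INR m + 1) / alpha)) as [F1 F2]. split.
      + apply Rle_div_r; lra.
      + apply Rle_lt_trans with ((INR m + 1) / alpha); auto.
        unfold Rdiv. apply Rmult_le_compat_r. left; apply Rinv_0_lt_compat; lra. lra. }
    lra.
Qed.

Lemma php n : forall f : nat -> nat, (forall k, (k <= n)%nat -> (f k < n)%nat) ->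
  exists i j, (i < j <= n)%nat /\ f i = f j.
Proof.
  induction n; intros f Hf.
  - specialize (Hf 0%nat (le_n 0)). lia.
  - destruct (Classical_Prop.classic (exists i, (i <= n)%nat /\ f i = f (S n))) as [[i [Hi E]]|Hno].
    + exists i, (S n). split. lia. exact E.
    + set (g := fun k => if Nat.eqb (f k) n then f (S n) else f k).
      destruct (IHn g) as [i [j [Hij E]]].
      { intros k Hk. unfold g. destruct (Nat.eqb (f k) n) eqn:Ek.
        - apply Nat.eqb_eq in Ek. assert (f (S n) < S n)%nat by (apply Hf; lia).
          assert (f (S n) <> n). { intro. apply Hno. exists k. split; lia. } lia.
        - apply Nat.eqb_neq in Ek. assert (f k < S n)%nat by (apply Hf; lia). lia. }
      unfold g in E.
      destruct (Nat.eqb (f i) n) eqn:Ei; destruct (Nat.eqb (f j) n) eqn:Ej.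
      * apply Nat.eqb_eq in Ei. apply Nat.eqb_eq in Ej. exists i, j. split. lia. lia.
      * exfalso. apply Hno. exists j. split. lia. auto.
      * exfalso. apply Hno. exists i. split. lia. auto.
      * exists i, j. split. lia. exact E.
Qed.

Definition U (k : nat) : R := IZR (rceil (INR k * alpha)) - INR k * alpha.

Lemma U_range k : 0 <= U k < 1.
Proof. unfold U. destruct (rceil_spec (INR k * alpha)). lra. Qed.

Lemma U_char k z : 0 <= IZR z - INR k * alpha < 1 -> U k = IZR z - INR k * alpha.
Proof. intros H. unfold U. rewrite (rceil_uniq _ z). reflexivity. lra. Qed.

Lemma U_nz k : k <> 0%nat -> U k <> 0.
Proof.
  intros Hk H0. apply Hirr. exists (rceil (INR k * alpha)), (Z.of_nat k).
  split. lia. rewrite <- INR_IZR_INZ. unfold U in H0.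
  assert (INR k <> 0) by (apply not_0_INR; exact Hk).
  apply (Rmult_eq_reg_r (INR k)); [|exact H].
  unfold Rdiv. rewrite Rmult_assoc, Rinv_l, Rmult_1_r by exact H. lra.
Qed.

Lemma U_diff i j : (i <= j)%nat ->
  U (j - i) = U j - U i \/ U (j - i) = U j - U i + 1.
Proof.
  intros Hij. set (z := (rceil (INR j * alpha) - rceil (INR i * alpha))%Z).
  pose proof (U_range i). pose proof (U_range j).
  assert (Ez : IZR z - INR (j - i) * alpha = U j - U i).
  { unfold z, U. rewrite minus_IZR, minus_INR by exact Hij. ring. }
  destruct (Rle_or_lt 0 (U j - U i)).
  - left. rewrite (U_char _ z). exact Ez. lra.
  - right. rewrite (U_char _ (z + 1)). rewrite plus_IZR. lra.
    rewrite plus_IZR. lra.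
Qed.

Lemma rfloor_nonneg x : 0 <= x -> (0 <= rfloor x)%Z.
Proof.
  intros H. destruct (rfloor_spec x). assert (IZR (-1) < IZR (rfloor x)) by (simpl; lra).
  apply lt_IZR in H2. lia.
Qed.

Lemma dens1 del : 0 < del -> exists d, (0 < U d < del) \/ (0 < U d /\ 1 - del < U d).
Proof.
  intros Hd.
  destruct (archimed (/ del)) as [A1 _].
  set (n := Z.to_nat (up (/ del))).
  assert (Hn : / del < INR n).
  { unfold n. rewrite INR_IZR_INZ, Z2Nat.id. lra.
    assert (0 < IZR (up (/ del))). { pose proof (Rinv_0_lt_compat _ Hd). lra. }
    apply lt_IZR in H. lia. }
  assert (Hn0 : 0 < INR n). { pose proof (Rinv_0_lt_compat _ Hd). lra. }
  assert (Hinv : / INR n < del).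
  { rewrite <- (Rinv_inv del). apply Rinv_lt_contravar. 
    apply Rmult_lt_0_compat. apply Rinv_0_lt_compat; lra. lra. exact Hn. }
  destruct (php n (fun k => Z.to_nat (rfloor (INR n * U k)))) as [i [j [Hij E]]].
  { intros k Hk. pose proof (U_range k).
    destruct (rfloor_spec (INR n * U k)) as [F1 F2].
    assert (IZR (rfloor (INR n * U k)) < IZR (Z.of_nat n)) by (rewrite <- INR_IZR_INZ; nra).
    apply lt_IZR in H0. pose proof (rfloor_nonneg (INR n * U k) ltac:(nra)). lia. }
  assert (Hfl : rfloor (INR n * U i) = rfloor (INR n * U j)).
  { pose proof (U_range i). pose proof (U_range j).
    assert (0 <= rfloor (INR n * U i))%Z by (apply rfloor_nonneg; nra).
    assert (0 <= rfloor (INR n * U j))%Z by (apply rfloor_nonneg; nra).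
    lia. }
  assert (Hc : Rabs (U j - U i) < / INR n).
  { destruct (rfloor_spec (INR n * U i)). destruct (rfloor_spec (INR n * U j)).
    rewrite Hfl in *.
    assert (Rabs (INR n * (U j - U i)) < 1) by (apply Rabs_def1; nra).
    rewrite Rabs_mult, Rabs_pos_eq in H3 by lra.
    apply (Rmult_lt_reg_l (INR n)). lra. rewrite Rinv_r; lra. }
  exists (j - i)%nat. pose proof (U_nz (j - i) ltac:(lia)). pose proof (U_range (j - i)).
  apply Rabs_def2 in Hc.
  destruct (U_diff i j ltac:(lia)) as [E1|E1]; rewrite E1 in *.
  - left. split; lra.
  - right. split; lra.
Qed.

Lemma mult_lemma eta : 0 < eta < 1 -> exists j : nat, (1 <= j)%nat /\ 1 - eta <= INR j * eta < 1.
Proof.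
  intros He. destruct (rceil_spec (/ eta)) as [C1 C2].
  set (J := rceil (/ eta)) in *.
  assert (Hi : 1 < / eta). { rewrite <- Rinv_1. apply Rinv_lt_contravar; lra. }
  assert (HJ : (1 < J)%Z). { apply lt_IZR. lra. }
  exists (Z.to_nat (J - 1)). rewrite INR_IZR_INZ, Z2Nat.id by lia. rewrite minus_IZR.
  split. lia.
  assert (eta * / eta = 1) by (field; lra).
  split; nra.
Qed.

Lemma U_mul j d : INR j * U d < 1 -> U (j * d) = INR j * U d.
Proof.
  intros H. pose proof (U_range d). pose proof (pos_INR j).
  rewrite (U_char _ (Z.of_nat j * rceil (INR d * alpha))).
  - unfold U. rewrite mult_IZR, <- INR_IZR_INZ, mult_INR. ring.
  - unfold U in *. rewrite mult_IZR, <- INR_IZR_INZ, mult_INR. split; nra.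
Qed.

Lemma U_mul2 j d : (1 <= j)%nat -> 0 < INR j * (1 - U d) ->  INR j * (1 - U d) <= 1 ->
  U (j * d) = 1 - INR j * (1 - U d).
Proof.
  intros Hj H1 H2. pose proof (U_range d).
  rewrite (U_char _ (Z.of_nat j * rceil (INR d * alpha) - Z.of_nat j + 1)).
  - unfold U. rewrite plus_IZR, minus_IZR, mult_IZR, <- INR_IZR_INZ, mult_INR. ring.
  - unfold U in *. rewrite plus_IZR, minus_IZR, mult_IZR, <- INR_IZR_INZ, mult_INR. split; nra.
Qed.

Lemma dens2 del : 0 < del -> (exists k, 0 < U k < del) /\ (exists k, 1 - del < U k).
Proof.
  intros Hd. destruct (dens1 del Hd) as [d [A|B]].
  - split. exists d; exact A.
    destruct (mult_lemma (U d)) as [j [Hj Hj2]]. pose proof (U_range d). lra.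
    exists (j * d)%nat. rewrite U_mul by lra. lra.
  - pose proof (U_range d). destruct B as [B1 B2]. split.
    + destruct (mult_lemma (1 - U d)) as [j [Hj Hj2]]. lra.
      exists (j * d)%nat. rewrite U_mul2 by (auto; nra). split; nra.
    + exists d. exact B2.
Qed.

Lemma dens3 del N : 0 < del ->
  (exists k, (N <= k)%nat /\ U k < del) /\ (exists k, (N <= k)%nat /\ 1 - del < U k).
Proof.
  intros Hd. split.
  - set (f := fun k => if Nat.eqb k 0 then 1 else U k).
    assert (Hf : 0 < mn f N).
    { apply mn_pos. intros k _. unfold f. destruct (Nat.eqb k 0) eqn:E. lra.
      apply Nat.eqb_neq in E. pose proof (U_nz k E). pose proof (U_range k). lra. }
    destruct (dens2 (Rmin del (mn f N)) ltac:(apply Rmin_glb_lt; lra)) as [[k Hk] _].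
    exists k. split.
    + destruct (Nat.lt_ge_cases k N) as [Hl|Hl]; auto.
      exfalso. pose proof (mn_le f N k Hl).
      destruct (Nat.eqb k 0) eqn:E.
      * apply Nat.eqb_eq in E. subst k. unfold U in Hk. simpl in Hk.
        rewrite Rmult_0_l in Hk. rewrite (rceil_uniq 0 0) in Hk. lra. simpl; lra.
      * assert (Hfk : f k = U k) by (unfold f; rewrite E; reflexivity).
        pose proof (Rmin_r del (mn f N)). lra.
    + pose proof (Rmin_l del (mn f N)). lra.
  - set (f := fun k => 1 - U k).
    assert (Hf : 0 < mn f N).
    { apply mn_pos. intros k _. unfold f. pose proof (U_range k). lra. }
    destruct (dens2 (Rmin del (mn f N)) ltac:(apply Rmin_glb_lt; lra)) as [_ [k Hk]].
    exists k. split.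
    + destruct (Nat.lt_ge_cases k N) as [Hl|Hl]; auto.
      exfalso. pose proof (mn_le f N k Hl).
      assert (Hfk : f k = 1 - U k) by reflexivity.
      pose proof (Rmin_r del (mn f N)). lra.
    + pose proof (Rmin_l del (mn f N)). lra.
Qed.

Lemma suffix_series k : is_series (Phi_term (suffix (oneC alpha) k)) (GG (U k)).
Proof.
  set (C := rceil (INR k * alpha)).
  set (c := fun j => (rceil (INR (k + j) * alpha) - C)%Z).
  assert (Hw : forall j, suffix (oneC alpha) k j = (c (S j) - c j)%Z).
  { intros j. unfold suffix, oneC, c. rewrite Nat.add_succ_r. lia. }
  assert (H0 : c O = 0%Z). { unfold c. rewrite Nat.add_0_r. lia. }
  assert (Hs : forall j, c (S j) = c j \/ c (S j) = (c j + 1)%Z).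
  { intros j. unfold c. rewrite Nat.add_succ_r, S_INR, Rmult_plus_distr_r, Rmult_1_l.
    destruct (rceil_step (INR (k + j) * alpha) alpha) as [E|E]. lra.
    rewrite E; lia. rewrite E; lia. }
  apply (gen_series _ c (pp (U k)) Hw H0 Hs).
  - intros j E. pose proof (c_nonneg c H0 Hs j) as Hn.
    unfold pp. rewrite INR_IZR_INZ, Z2Nat.id by exact Hn.
    replace (rfloor ((IZR (c j) + U k) / alpha)) with (Z.of_nat j). lia.
    symmetry. apply rfloor_uniq. rewrite <- INR_IZR_INZ.
    assert (E2 : rceil (INR (k + S j) * alpha) = (rceil (INR (k + j) * alpha) + 1)%Z).
    { unfold c in E. lia. }
    assert (E3 : IZR (c j) = IZR (rceil (INR (k + j) * alpha)) - IZR C).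
    { unfold c. rewrite minus_IZR. ring. }
    rewrite E3. unfold U. fold C.
    destruct (rceil_spec (INR (k + j) * alpha)) as [_ A2].
    destruct (rceil_spec (INR (k + S j) * alpha)) as [B1 _].
    rewrite E2, plus_IZR in B1.
    rewrite Nat.add_succ_r, S_INR, plus_INR in B1. rewrite plus_INR in A2.
    rewrite plus_INR.
    split.
    + apply Rle_div_r. lra. lra.
    + apply Rlt_div_l. lra. lra.
  - intros M. destruct (archimed ((INR M + 1) / alpha)) as [A1 _].
    assert (0 < IZR (up ((INR M + 1) / alpha))).
    { assert (0 < (INR M + 1) / alpha) by (apply Rdiv_lt_0_compat; pose proof (pos_INR M); lra). lra. }
    exists (Z.to_nat (up ((INR M + 1) / alpha))).
    set (N := Z.to_nat (up ((INR M + 1) / alpha))) in *.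
    assert (HN : (INR M + 1) / alpha < INR N).
    { unfold N. rewrite (INR_IZR_INZ (Z.to_nat _)), Z2Nat.id. lra. apply lt_IZR in H. lia. }
    apply Rlt_div_l in HN; [|lra].
    unfold c. destruct (rceil_spec (INR (k + N) * alpha)) as [_ A2].
    destruct (rceil_spec (INR k * alpha)) as [B1 _]. fold C in B1.
    rewrite plus_INR in A2.
    assert (IZR (Z.of_nat M) - 1 < IZR (rceil (INR (k + N) * alpha) - C)).
    { rewrite minus_IZR, <- INR_IZR_INZ, plus_INR. nra. }
    assert (IZR (Z.of_nat M - 1) < IZR (rceil (INR (k + N) * alpha) - C)) by (rewrite minus_IZR; lra).
    apply lt_IZR in H2. lia.
  - apply ex_aa. pose proof (U_range k). lra.
Qed.

Lemma zero_series : is_series (Phi_term (zeroC alpha)) (GG 1).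
Proof.
  set (c := fun j => rfloor (INR j * alpha)).
  assert (Hw : forall j, zeroC alpha j = (c (S j) - c j)%Z) by reflexivity.
  assert (H0 : c O = 0%Z). { unfold c. apply rfloor_uniq. simpl. lra. }
  assert (Hs : forall j, c (S j) = c j \/ c (S j) = (c j + 1)%Z).
  { intros j. unfold c. rewrite S_INR, Rmult_plus_distr_r, Rmult_1_l.
    apply rfloor_step. lra. }
  apply (gen_series _ c (pp 1) Hw H0 Hs).
  - intros j E. pose proof (c_nonneg c H0 Hs j) as Hn.
    unfold pp. rewrite INR_IZR_INZ, Z2Nat.id by exact Hn.
    replace (rfloor ((IZR (c j) + 1) / alpha)) with (Z.of_nat j). lia.
    symmetry. apply rfloor_uniq. rewrite <- INR_IZR_INZ.
    unfold c in E. unfold c.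
    destruct (rfloor_spec (INR j * alpha)) as [_ A2].
    destruct (rfloor_spec (INR (S j) * alpha)) as [B1 _].
    rewrite E in B1. rewrite plus_IZR in B1. rewrite S_INR in B1.
    assert (Hne : IZR (rfloor (INR j * alpha)) + 1 <> (INR j + 1) * alpha).
    { intro Heq. apply Hirr. exists (rfloor (INR j * alpha) + 1)%Z, (Z.of_nat j + 1)%Z.
      split. lia. rewrite !plus_IZR, <- INR_IZR_INZ. rewrite Heq. field.
      pose proof (pos_INR j). lra. }
    split.
    + apply Rle_div_r. lra. lra.
    + apply Rlt_div_l. lra. lra.
  - intros M. destruct (archimed ((INR M + 1) / alpha)) as [A1 _].
    assert (0 < IZR (up ((INR M + 1) / alpha))).
    { assert (0 < (INR M + 1) / alpha) by (apply Rdiv_lt_0_compat; pose proof (pos_INR M); lra). lra. }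
    exists (Z.to_nat (up ((INR M + 1) / alpha))).
    set (N := Z.to_nat (up ((INR M + 1) / alpha))) in *.
    assert (HN : (INR M + 1) / alpha < INR N).
    { unfold N. rewrite (INR_IZR_INZ (Z.to_nat _)), Z2Nat.id. lra. apply lt_IZR in H. lia. }
    apply Rlt_div_l in HN; [|lra].
    unfold c. destruct (rfloor_spec (INR N * alpha)) as [_ A2].
    assert (Hlt : IZR (Z.of_nat M - 1) < IZR (rfloor (INR N * alpha))).
    { rewrite minus_IZR, <- INR_IZR_INZ. nra. }
    apply lt_IZR in Hlt. lia.
  - apply ex_aa. lra.
Qed.

Lemma GG_rel : GG 1 = 3 * GG 0 - 1.
Proof.
  unfold GG. rewrite (Series_incr_1 (aa 0)) by (apply ex_aa; lra).
  assert (E : forall m, aa 1 m = 3 * aa 0 (S m)).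
  { intros m. unfold aa, pp. rewrite S_INR, Rplus_0_r. simpl. field. apply pow_nonzero; lra. }
  rewrite (Series_ext _ _ E), Series_scal_l.
  assert (aa 0 0 = / 3).
  { unfold aa, pp. simpl. rewrite Rplus_0_r. unfold Rdiv. rewrite Rmult_0_l.
    rewrite (rfloor_uniq 0 0) by (simpl; lra). simpl. field. }
  rewrite H. field.
Qed.
End Alpha.

Theorem lemma37 (alpha : R) :
  irrational alpha -> ln 2 / ln 3 < alpha -> alpha < 1 ->
  (* the series defining Phi_R converge in the situation considered *)
  ex_series (Phi_term (oneC alpha)) /\ ex_series (Phi_term (zeroC alpha)) /\
  (forall k : nat, ex_series (Phi_term (suffix (oneC alpha) k))) /\
  LimSup_seq (fun k => PhiR (suffix (oneC alpha) k)) = Finite (PhiR (oneC alpha)) /\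
  LimInf_seq (fun k => PhiR (suffix (oneC alpha) k)) = Finite (PhiR (zeroC alpha)) /\
  PhiR (zeroC alpha) = 3 * PhiR (oneC alpha) + 1.
Proof.
  intros Hirr Hl Ha1.
  assert (Hl2 : 0 < ln 2) by (rewrite <- ln_1; apply ln_increasing; lra).
  assert (Hl3 : 0 < ln 3) by (rewrite <- ln_1; apply ln_increasing; lra).
  assert (Ha0 : 0 < alpha).
  { apply Rlt_trans with (ln 2 / ln 3). apply Rdiv_lt_0_compat; lra. exact Hl. }
  assert (Hq : ln 2 < alpha * ln 3).
  { apply Rlt_div_l in Hl; [|lra]. lra. }
  pose proof (suffix_series alpha Ha0 Ha1 Hq) as SS.
  pose proof (zero_series alpha Ha0 Ha1 Hq Hirr) as ZS.
  assert (U0 : U alpha 0 = 0).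
  { unfold U. simpl. rewrite Rmult_0_l. rewrite (rceil_uniq 0 0) by (simpl; lra). simpl. ring. }
  assert (P0 : PhiR (oneC alpha) = - GG alpha 0).
  { change (PhiR (suffix (oneC alpha) 0) = - GG alpha 0). unfold PhiR.
    rewrite (is_series_unique _ _ (SS 0%nat)), U0. reflexivity. }
  assert (Pk : forall k, PhiR (suffix (oneC alpha) k) = - GG alpha (U alpha k)).
  { intros k. unfold PhiR. rewrite (is_series_unique _ _ (SS k)). reflexivity. }
  assert (PZ : PhiR (zeroC alpha) = - GG alpha 1).
  { unfold PhiR. rewrite (is_series_unique _ _ ZS). reflexivity. }
  pose proof (U_range alpha) as UR.
  split; [|split; [|split; [|split; [|split]]]].
  - change (ex_series (Phi_term (suffix (oneC alpha) 0))). eexists; apply SS.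
  - eexists; apply ZS.
  - intros k; eexists; apply SS.
  - apply is_LimSup_seq_unique. intros eps. rewrite P0. split.
    + intros N. destruct (near0 alpha Ha0 Ha1 Hq eps (cond_pos eps)) as [del [Hd Hn]].
      destruct (dens3 alpha Ha0 Ha1 Hq Hirr del N Hd) as [[k [Hk1 Hk2]] _].
      exists k. split. exact Hk1. rewrite Pk.
      specialize (Hn (U alpha k) ltac:(pose proof (UR k); lra)). lra.
    + exists 0%nat. intros n _. rewrite Pk.
      pose proof (GG_mono alpha Ha0 Ha1 Hq 0 (U alpha n)) as M.
      pose proof (UR n). pose proof (cond_pos eps).
      assert (GG alpha 0 <= GG alpha (U alpha n)) by (apply M; lra). lra.
  - apply is_LimInf_seq_unique. intros eps. rewrite PZ. split.
    + intros N. destruct (near1 alpha Ha0 Ha1 Hq Hirr eps (cond_pos eps)) as [del [Hd Hn]].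
      destruct (dens3 alpha Ha0 Ha1 Hq Hirr del N Hd) as [_ [k [Hk1 Hk2]]].
      exists k. split. exact Hk1. rewrite Pk.
      specialize (Hn (U alpha k) ltac:(pose proof (UR k); lra)). lra.
    + exists 0%nat. intros n _. rewrite Pk.
      pose proof (GG_mono alpha Ha0 Ha1 Hq (U alpha n) 1) as M.
      pose proof (UR n). pose proof (cond_pos eps).
      assert (GG alpha (U alpha n) <= GG alpha 1) by (apply M; lra). lra.
  - rewrite PZ, P0, (GG_rel alpha Ha0 Ha1 Hq). ring.
Qed.
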